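(* Let $I$ be a modal intuitionistic formula, $\varphi(x)=ST_{22}(I,x)$ and $k=r(\varphi)$. Let $\Theta\supseteq\Sigma_\varphi$, let $(M_1,t),(M_2,u)$ be pointed $\Theta$-models, let $l\in\mathbb{N}$, and let $(A,B)$ be a $(2,2)$-modal $\langle(M_1,t),(M_2,u)\rangle_l$-asimulation. Then for all $i,j\in\{1,2\}$, all $m$, all $(\bar a_m,a)\in U_i^{m+1}$ and $(\bar b_m,b)\in U_j^{m+1}$: if $(\bar a_m,a)\,A\,(\bar b_m,b)$, $m+k\le l$ and $a\models_i\varphi(x)$, then $b\models_j\varphi(x)$.
   Context: Correspondence language: classical first-order logic without identity over $\Sigma=\{R,R_\Box,R_\Diamond,P_1,P_2,\dots\}$ ($R,R_\Box,R_\Diamond$ binary, $P_n$ unary). $\Theta$ is a subset of $\Sigma$ containing $R,R_\Box,R_\Diamond$; $\Theta$-models $M_k=\langle U_k,\iota_k\rangle$, with $R_k=\iota_k(R)$, $R_{\Box k}=\iota_k(R_\Box)$, $R_{\Diamond k}=\iota_k(R_\Diamond)$. $\Sigma_\varphi=\{R,R_\Box,R_\Diamond\}\cup\{P_n:P_n\text{ occurs in }\varphi\}$. $a\models_k\varphi(x)$ means $\varphi$ holds in $M_k$ under assignments sending $x$ to $a$. $r(\varphi)$ is the quantifier depth: $r$ of atoms and $\bot$ is $0$, $r(\varphi\circ\psi)=\max(r(\varphi),r(\psi))$ for binary connectives, $r(Qx\varphi)=r(\varphi)+1$. $s\overset{\leftrightarrow}{A}t$ means $sAt$ and $tAs$.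 Modal intuitionistic formulas: built from $p_n,\bot$ with $\wedge,\vee,\to,\Box,\Diamond$. $ST_{22}$: $ST_{22}(p_n,x)=P_n(x)$, $ST_{22}(\bot,x)=\bot$, commutes with $\wedge,\vee$; $ST_{22}(I\to J,x)=\forall y(R(x,y)\to(ST_{22}(I,y)\to ST_{22}(J,y)))$; $ST_{22}(\Box I,x)=\forall y(R(x,y)\to\forall z(R_\Box(y,z)\to ST_{22}(I,z)))$; $ST_{22}(\Diamond I,x)=\forall y(R(x,y)\to\exists z(R_\Diamond(y,z)\wedge ST_{22}(I,z)))$. A $(2,2)$-modal $\langle(M_1,t),(M_2,u)\rangle_l$-asimulation is a pair $(A,B)$ of relations on finite nonempty tuples such that, for all $i,j\in\{1,2\}$, $m$, $\bar a_m,a,c,e\in U_i$, $\bar b_m,b,d,f\in U_j$, unary $P\in\Theta$: $A,B\subseteq\bigcup_{n>0}((U_1^n\times U_2^n)\cup(U_2^n\times U_1^n))$; $tAu$; if $(\bar a_m,a)A(\bar b_m,b)$ and $a\models_iP(x)$ then $b\models_jP(x)$; if $(\bar a_m,a)A(\bar b_m,b)$, $bR_jd$, $m<l$ then some $c\in U_i$ has $aR_ic$ and $(\bar a_m,a,c)\overset{\leftrightarrow}{A}(\bar b_m,b,d)$; if $(\bar a_m,a)A(\bar b_m,b)$, $bR_jd$, $dR_{\Box j}f$, $m+1<l$ then some $c,e\in U_i$ have $aR_ic$, $cR_{\Box i}e$, $(\bar a_m,a,c,e)A(\bar b_m,b,d,f)$; if $(\bar a_m,a)A(\bar b_m,b)$,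 $bR_jd$, $m+1<l$ then some $c\in U_i$ has $aR_ic$ and $(\bar a_m,a,c)B(\bar b_m,b,d)$; if $(\bar a_m,a)B(\bar b_m,b)$, $aR_{\Diamond i}c$, $m<l$ then some $d\in U_j$ has $bR_{\Diamond j}d$ and $(\bar a_m,a,c)A(\bar b_m,b,d)$. *)

(* Defs.v *)
From mathcomp Require Import all_boot.
Set Implicit Arguments. Unset Strict Implicit. Unset Printing Implicit Defensive.

Inductive mform : Type :=
| MVar : nat -> mform
| MBot : mform
| MAnd : mform -> mform -> mform
| MOr  : mform -> mform -> mform
| MImp : mform -> mform -> mform
| MBox : mform -> mform
| MDia : mform -> mform.

Inductive fo : Type :=
| FR   : nat -> nat -> fo
| FRb  : nat -> nat -> fo
| FRd  : nat -> nat -> fo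
| FP   : nat -> nat -> fo        (* FP n x  =  P_n(x) *)
| FBot : fo
| FNot : fo -> fo
| FAnd : fo -> fo -> fo
| FOr  : fo -> fo -> fo
| FImp : fo -> fo -> fo
| FAll : nat -> fo -> fo
| FEx  : nat -> fo -> fo.

Fixpoint qdepth (f : fo) : nat :=
  match f with
  | FR _ _ | FRb _ _ | FRd _ _ | FP _ _ | FBot => 0
  | FNot g => qdepth g
  | FAnd g h | FOr g h | FImp g h => maxn (qdepth g) (qdepth h)
  | FAll _ g | FEx _ g => (qdepth g).+1
  end.

Fixpoint occursP (n : nat) (f : fo) : Prop :=
  match f with
  | FP m _ => m = n
  | FR _ _ | FRb _ _ | FRd _ _ | FBot => False
  | FNot g => occursP n g
  | FAnd g h | FOr g h | FImp g h => occursP n g \/ occursP n h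
  | FAll _ g | FEx _ g => occursP n g
  end.

(* Standard translation ST_22.  ST22 I x uses the fresh bound variables
   y := x+1 and z := x+2 (inner translations only mention their own free
   variable, so this choice of names is harmless). *)
Fixpoint ST22 (I : mform) (x : nat) : fo :=
  match I with
  | MVar n => FP n x
  | MBot => FBot
  | MAnd J K => FAnd (ST22 J x) (ST22 K x)
  | MOr J K => FOr (ST22 J x) (ST22 K x)
  | MImp J K =>
      FAll x.+1 (FImp (FR x x.+1) (FImp (ST22 J x.+1) (ST22 K x.+1)))
  | MBox J =>
      FAll x.+1 (FImp (FR x x.+1)
        (FAll x.+2 (FImp (FRb x.+1 x.+2) (ST22 J x.+2))))
  | MDia J =>
      FAll x.+1 (FImp (FR x x.+1)
        (FEx x.+2 (FAnd (FRd x.+1 x.+2) (ST22 J x.+2))))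
  end.

Definition xvar : nat := 0.

(* ---------- Models ----------
   A model interprets R, R_Box, R_Dia and every P_n; the interpretation of
   P_n for n outside Theta plays no role. *)
Record model : Type := Model {
  dom  : Type;
  relR : dom -> dom -> Prop;
  relB : dom -> dom -> Prop;
  relD : dom -> dom -> Prop;
  valP : nat -> dom -> Prop
}.

Definition upd (M : model) (g : nat -> dom M) (v : nat) (a : dom M) : nat -> dom M :=
  fun w => if w == v then a else g w.

Fixpoint sat (M : model) (g : nat -> dom M) (f : fo) : Prop :=
  match f with
  | FR x y => relR (g x) (g y)
  | FRb x y => relB (g x) (g y)
  | FRd x y => relD (g x) (g y)
  | FP n x => valP n (g x)
  | FBot => False
  | FNot h => ~ sat g h
  | FAnd h k => sat g h /\ sat g k
  | FOr h k => sat g h \/ sat g k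
  | FImp h k => sat g h -> sat g k
  | FAll v h => forall a : dom M, sat (upd g v a) h
  | FEx v h => exists a : dom M, sat (upd g v a) h
  end.

Definition sat_at (M : model) (a : dom M) (phi : fo) : Prop :=
  forall g : nat -> dom M, g xvar = a -> sat g phi.

Inductive side : Type := S1 | S2.

Definition side_model (M1 M2 : model) (i : side) : model :=
  match i with S1 => M1 | S2 => M2 end.

Definition tuprel (M1 M2 : model) : Type :=
  forall i j : side, seq (dom (side_model M1 M2 i)) -> seq (dom (side_model M1 M2 j)) -> Prop.

(* (A,B) is a (2,2)-modal <(M1,t),(M2,u)>_l-asimulation;
   Theta n  means  P_n \in Theta  (R, R_Box, R_Dia are always in Theta). *)
Definition asimulation (Theta : nat -> Prop) (M1 M2 : model)
    (t : dom M1) (u : dom M2) (l : nat) (A B : tuprel M1 M2) : Prop :=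
  let M := side_model M1 M2 in
  (* A, B are subsets of U_(1)^n x U_(2)^n  u  U_(2)^n x U_(1)^n, n > 0 *)
  (forall i j s s', A i j s s' -> i <> j /\ size s = size s' /\ 0 < size s) /\
  (forall i j s s', B i j s s' -> i <> j /\ size s = size s' /\ 0 < size s) /\
  A S1 S2 [:: t] [:: u] /\
  (forall (i j : side) (m : nat)
          (as_ : seq (dom (M i))) (a c e : dom (M i))
          (bs : seq (dom (M j))) (b d f : dom (M j)),
      size as_ = m -> size bs = m ->
      (forall n, Theta n ->
         A i j (rcons as_ a) (rcons bs b) -> valP n a -> valP n b) /\
      (A i j (rcons as_ a) (rcons bs b) -> relR b d -> m < l ->
         exists c0 : dom (M i), relR a c0 /\
           A i j (rcons (rcons as_ a) c0) (rcons (rcons bs b) d) /\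
           A j i (rcons (rcons bs b) d) (rcons (rcons as_ a) c0)) /\
      (A i j (rcons as_ a) (rcons bs b) -> relR b d -> relB d f -> m.+1 < l ->
         exists (c0 e0 : dom (M i)), relR a c0 /\ relB c0 e0 /\
           A i j (rcons (rcons (rcons as_ a) c0) e0)
                 (rcons (rcons (rcons bs b) d) f)) /\
      (A i j (rcons as_ a) (rcons bs b) -> relR b d -> m.+1 < l ->
         exists c0 : dom (M i), relR a c0 /\
           B i j (rcons (rcons as_ a) c0) (rcons (rcons bs b) d)) /\
      (B i j (rcons as_ a) (rcons bs b) -> relD a c -> m < l ->
         exists d0 : dom (M j), relD b d0 /\
           A i j (rcons (rcons as_ a) c) (rcons (rcons bs b) d0))).

Arguments asimulation Theta M1 M2 t u l A B : clear implicits.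
Arguments sat_at M a phi : clear implicits.

(* Main.v *)
Require Import Defs.
From mathcomp Require Import all_boot.
From mathcomp Require Import zify.

Fixpoint Sem (M : model) (I : mform) (a : dom M) : Prop :=
  match I with
  | MVar n => Defs.valP n a
  | MBot => False
  | MAnd J K => Sem M J a /\ Sem M K a
  | MOr J K => Sem M J a \/ Sem M K a
  | MImp J K => forall c, relR a c -> Sem M J c -> Sem M K c
  | MBox J => forall c, relR a c -> forall e, relB c e -> Sem M J e
  | MDia J => forall c, relR a c -> exists e, relD c e /\ Sem M J e
  end.
Arguments Sem {M}.

Lemma upd_same (M : model) (g : nat -> dom M) v a : upd g v a v = a.
Proof. by rewrite /upd eqxx. Qed.

Lemma upd_other (M : model) (g : nat -> dom M) v a w : w <> v -> upd g v a w = g w.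
Proof. move=> H; rewrite /upd; case: eqP => //. Qed.

Lemma ST22_sem (M : model) (I : mform) : forall x (g : nat -> dom M),
  sat g (ST22 I x) <-> Sem I (g x).
Proof.
elim: I => [n|| J IHJ K IHK | J IHJ K IHK | J IHJ K IHK | J IHJ | J IHJ] x g /=.
- by [].
- by [].
- by rewrite IHJ IHK.
- by rewrite IHJ IHK.
- split => H c.
  + move: (H c). rewrite upd_same upd_other; last by lia.
    by rewrite IHJ IHK upd_same.
  + rewrite upd_same upd_other; last by lia.
    by rewrite IHJ IHK upd_same; apply: H.
- split => H c.
  + move: (H c). rewrite upd_same upd_other; last by lia.
    move=> H1 Hc e He; move: (H1 Hc e).
    rewrite IHJ !upd_same upd_other; last by lia.
    by rewrite upd_same; apply.
  + rewrite upd_same upd_other; last by lia.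
    move=> Hc e; rewrite IHJ !upd_same upd_other; last by lia.
    rewrite upd_same; exact: H.
- split => H c.
  + move: (H c). rewrite upd_same upd_other; last by lia.
    move=> H1 Hc; case: (H1 Hc) => e.
    rewrite IHJ !upd_same upd_other; last by lia.
    rewrite upd_same => ?; by exists e.
  + rewrite upd_same upd_other; last by lia.
    move=> Hc; case: (H c Hc) => e He; exists e.
    rewrite IHJ !upd_same upd_other; last by lia.
    by rewrite upd_same.
Qed.

Fixpoint vars (I : mform) (n : nat) : Prop :=
  match I with
  | MVar k => k = n
  | MBot => False
  | MAnd J K | MOr J K | MImp J K => vars J n \/ vars K n
  | MBox J | MDia J => vars J n
  end.

Lemma occ_vars I : forall x n, occursP n (ST22 I x) <-> vars I n.
Proof.
elim: I => [k|| J IHJ K IHK | J IHJ K IHK | J IHJ K IHK | J IHJ | J IHJ] x n /=;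
  rewrite ?IHJ ?IHK; tauto.
Qed.

Fixpoint mdepth (I : mform) : nat :=
  match I with
  | MVar _ | MBot => 0
  | MAnd J K | MOr J K => maxn (mdepth J) (mdepth K)
  | MImp J K => (maxn (mdepth J) (mdepth K)).+1
  | MBox J | MDia J => (mdepth J).+2
  end.

Lemma qdepth_ST I : forall x, qdepth (ST22 I x) = mdepth I.
Proof.
elim: I => [k|| J IHJ K IHK | J IHJ K IHK | J IHJ K IHK | J IHJ | J IHJ] x /=;
  rewrite ?IHJ ?IHK //; lia.
Qed.

Lemma main_sem (Theta : nat -> Prop)
  (M1 M2 : model) (t : dom M1) (u : dom M2) (l : nat) (A B : tuprel M1 M2) :
  asimulation Theta M1 M2 t u l A B ->
  forall I, (forall n, vars I n -> Theta n) ->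
  forall (i j : side) (m : nat)
         (as_ : seq (dom (side_model M1 M2 i))) (a : dom (side_model M1 M2 i))
         (bs : seq (dom (side_model M1 M2 j))) (b : dom (side_model M1 M2 j)),
    size as_ = m -> size bs = m ->
    A i j (rcons as_ a) (rcons bs b) ->
    m + mdepth I <= l ->
    Sem I a -> Sem I b.
Proof.
move=> [_ [_ [_ Hs]]].
elim=> [k|| J IHJ K IHK | J IHJ K IHK | J IHJ K IHK | J IHJ | J IHJ] HT i j m as_ a bs b
  Ha Hb HA Hl; rewrite /= in Hl HT *.
- have [H _] := Hs i j m as_ a a a bs b b b Ha Hb.
  by apply: H => //; apply: HT.
- by [].
- move=> [H1 H2]; split.
  + by apply: (IHJ _ i j m as_ a bs b) => //; try (move=> n ?; apply: HT; by [left|right]); try lia.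
  + by apply: (IHK _ i j m as_ a bs b) => //; try (move=> n ?; apply: HT; by [left|right]); try lia.
- move=> [H1|H2]; [left|right].
  + by apply: (IHJ _ i j m as_ a bs b) => //; try (move=> n ?; apply: HT; by [left|right]); try lia.
  + by apply: (IHK _ i j m as_ a bs b) => //; try (move=> n ?; apply: HT; by [left|right]); try lia.
- move=> H d Hbd HJd.
  have [_ [Hf _]] := Hs i j m as_ a a a bs b d d Ha Hb.
  have [c0 [Hac [HA1 HA2]]] := Hf HA Hbd ltac:(lia).
  have HJc : Sem J c0.
    apply: (IHJ _ j i m.+1 (rcons bs b) d (rcons as_ a) c0) => //;
      rewrite ?size_rcons ?Ha ?Hb //; try (move=> n ?; apply: HT; by [left|right]); try lia.
  apply: (IHK _ i j m.+1 (rcons as_ a) c0 (rcons bs b) d) => //;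
    rewrite ?size_rcons ?Ha ?Hb //; try (move=> n ?; apply: HT; by [left|right]); try lia; exact: H.
- move=> H d Hbd f Hdf.
  have [_ [_ [Hf _]]] := Hs i j m as_ a a a bs b d f Ha Hb.
  have [c0 [e0 [Hac [Hce HA1]]]] := Hf HA Hbd Hdf ltac:(lia).
  apply: (IHJ HT i j m.+2 (rcons (rcons as_ a) c0) e0 (rcons (rcons bs b) d) f) => //;
    rewrite ?size_rcons ?Ha ?Hb //; [lia | exact: H Hac e0 Hce].
- move=> H d Hbd.
  have [_ [_ [_ [Hf _]]]] := Hs i j m as_ a a a bs b d d Ha Hb.
  have [c0 [Hac HB1]] := Hf HA Hbd ltac:(lia).
  have [e [Hce HJe]] := H c0 Hac.
  have [_ [_ [_ [_ Hg]]]] := Hs i j m.+1 (rcons as_ a) c0 e e (rcons bs b) d d d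
     ltac:(by rewrite size_rcons Ha) ltac:(by rewrite size_rcons Hb).
  have [d0 [Hdd HA2]] := Hg HB1 Hce ltac:(lia).
  exists d0; split => //.
  apply: (IHJ HT i j m.+2 (rcons (rcons as_ a) c0) e (rcons (rcons bs b) d) d0) => //;
    rewrite ?size_rcons ?Ha ?Hb //; lia.
Qed.

Theorem mainTheorem3 (I : mform) (Theta : nat -> Prop)
  (M1 M2 : model) (t : dom M1) (u : dom M2) (l : nat) (A B : tuprel M1 M2) :
  (forall n, occursP n (ST22 I xvar) -> Theta n) ->
  asimulation Theta M1 M2 t u l A B ->
  forall (i j : side) (m : nat)
         (as_ : seq (dom (side_model M1 M2 i))) (a : dom (side_model M1 M2 i))
         (bs : seq (dom (side_model M1 M2 j))) (b : dom (side_model M1 M2 j)),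
    size as_ = m -> size bs = m ->
    A i j (rcons as_ a) (rcons bs b) ->
    m + qdepth (ST22 I xvar) <= l ->
    sat_at (side_model M1 M2 i) a (ST22 I xvar) ->
    sat_at (side_model M1 M2 j) b (ST22 I xvar).
Proof.
move=> HT Has i j m as_ a bs b Ha Hb HA Hl Hsat g Hg.
rewrite ST22_sem Hg.
have Ha' : Sem I a.
  have := Hsat (fun _ => a) erefl. by rewrite ST22_sem.
have HT' : forall n, vars I n -> Theta n.
  by move=> n /(occ_vars I xvar n) /HT.
have Hl' : m + mdepth I <= l by rewrite -(qdepth_ST I xvar).
exact: (main_sem _ _ _ _ _ _ _ _ Has I HT' i j m as_ a bs b Ha Hb HA Hl' Ha').
Qed.
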